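(* Let $n\ge 1$ and let $A$ be a $2n\times 2n$ real symmetric positive definite matrix, written in block form $A=\begin{pmatrix} A_{11} & A_{12}\\ A_{12}^T & A_{22}\end{pmatrix}$ with $n\times n$ blocks. Let $\Delta_{11},\Delta_{22}\in\mathbb{R}^n$ be the vectors of diagonal entries of $A_{11}$ and $A_{22}$ (their entries are positive), and set $\Delta_{\mathrm{s}}(A)\coloneqq\sqrt{\Delta_{11}\cdot\Delta_{22}}$ (entrywise product and square root). Define the $2n\times 2n$ diagonal matrix $$M\coloneqq \operatorname{diag}\!\left(\sqrt[4]{\Delta_{11}^{-1}\cdot\Delta_{22}}\right)\oplus \operatorname{diag}\!\left(\sqrt[4]{\Delta_{11}\cdot\Delta_{22}^{-1}}\right),$$ where all operations on vectors are entrywise. Then $M$ is symplectic, and $\Delta_{\mathrm{s}}(A)\prec d_{\mathrm{s}}(A)$ holds if and only if $MAM$ is orthosymplectically diagonalizable in the sense of Williamson's theorem.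
   Context: Let $J_{2n}=\begin{pmatrix}0 & I_n\\ -I_n & 0\end{pmatrix}$. A $2n\times 2n$ real matrix $S$ is symplectic if $S^TJ_{2n}S=J_{2n}$; $S$ is orthosymplectic if it is symplectic and orthogonal ($S^TS=I_{2n}$). Williamson's theorem: for every $2n\times 2n$ real symmetric positive definite matrix $B$ there is a symplectic $S$ with $S^TBS=\begin{pmatrix} D&0\\0&D\end{pmatrix}$, where $D$ is an $n\times n$ diagonal matrix with positive diagonal entries; these diagonal entries, which are uniquely determined up to order, are the symplectic eigenvalues of $B$, and $d_{\mathrm{s}}(B)\in\mathbb{R}^n$ denotes the vector of symplectic eigenvalues $d_1(B)\le\cdots\le d_n(B)$. $B$ is called orthosymplectically diagonalizable in the sense of Williamson's theorem if such an $S$ can be chosen orthosymplectic. For $x\in\mathbb{R}^n$ write $x^\uparrow_1\le\cdots\le x^\uparrow_n$ for its entries in increasing order. For $x,y\in\mathbb{R}^n$, $x$ is majorized by $y$, written $x\prec y$, if $\sum_{i=1}^k x^\uparrow_i\ge\sum_{i=1}^k y^\uparrow_i$ for $k=1,\dots,n$, with equality for $k=n$. $\operatorname{diag}(x)$ is the diagonal matrix with diagonal $x$, and $\oplus$ denotes the usual block-diagonal direct sum. *)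

(* Defs.v *)
From HB Require Import structures.
From mathcomp Require Import all_boot all_order all_algebra.
From mathcomp Require Import reals.
Set Implicit Arguments. Unset Strict Implicit. Unset Printing Implicit Defensive.
Import Order.TTheory GRing.Theory Num.Theory.
Local Open Scope ring_scope.

Section Defs.
Variable R : realType.

Definition Jmx (n : nat) : 'M[R]_(n + n) :=
  block_mx 0 1%:M (- 1%:M) 0.

Definition symplectic (n : nat) (S : 'M[R]_(n + n)) : Prop :=
  S^T *m Jmx n *m S = Jmx n.

Definition orthogonal_mx (m : nat) (S : 'M[R]_m) : Prop :=
  S^T *m S = 1%:M.

Definition orthosymplectic (n : nat) (S : 'M[R]_(n + n)) : Prop :=
  symplectic S /\ orthogonal_mx S.

Definition sym_posdef (m : nat) (B : 'M[R]_m) : Prop :=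
  B^T = B /\ forall x : 'cV[R]_m, x != 0 -> 0 < (x^T *m B *m x) 0 0.

Definition dbl_diag (n : nat) (d : 'rV[R]_n) : 'M[R]_(n + n) :=
  block_mx (diag_mx d) 0 0 (diag_mx d).

(* d is a vector of symplectic eigenvalues of B (Williamson's theorem),
   in some order: positive entries and S^T B S = diag(d) (+) diag(d)
   for some symplectic S. *)
Definition symp_eigvals (n : nat) (B : 'M[R]_(n + n)) (d : 'rV[R]_n) : Prop :=
  (forall i, 0 < d 0 i) /\
  exists S : 'M[R]_(n + n), symplectic S /\ S^T *m B *m S = dbl_diag d.

Definition orthosymp_diagonalizable (n : nat) (B : 'M[R]_(n + n)) : Prop :=
  exists S : 'M[R]_(n + n), exists D : 'rV[R]_n,
    orthosymplectic S /\ (forall i, 0 < D 0 i) /\ S^T *m B *m S = dbl_diag D.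

Definition sorted_up (n : nat) (x : 'rV[R]_n) : seq R :=
  sort <=%R [seq x 0 i | i <- enum 'I_n].

(* x is majorized by y (increasing-order convention of the paper) *)
Definition majorized (n : nat) (x y : 'rV[R]_n) : Prop :=
  (forall k, (k <= n)%N ->
     \sum_(i < k) nth 0 (sorted_up y) i <= \sum_(i < k) nth 0 (sorted_up x) i) /\
  \sum_(i < n) nth 0 (sorted_up x) i = \sum_(i < n) nth 0 (sorted_up y) i.

Definition Delta11 (n : nat) (A : 'M[R]_(n + n)) : 'rV[R]_n :=
  \row_i A (lshift n i) (lshift n i).
Definition Delta22 (n : nat) (A : 'M[R]_(n + n)) : 'rV[R]_n :=
  \row_i A (rshift n i) (rshift n i).

Definition Delta_s (n : nat) (A : 'M[R]_(n + n)) : 'rV[R]_n :=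
  \row_i Num.sqrt (Delta11 A 0 i * Delta22 A 0 i).

Definition root4 (x : R) : R := Num.sqrt (Num.sqrt x).

Definition Mmx (n : nat) (A : 'M[R]_(n + n)) : 'M[R]_(n + n) :=
  block_mx
    (diag_mx (\row_i root4 ((Delta11 A 0 i)^-1 * Delta22 A 0 i))) 0
    0 (diag_mx (\row_i root4 (Delta11 A 0 i * (Delta22 A 0 i)^-1))).

End Defs.

(* Main.v *)
Require Import Defs.
From HB Require Import structures.
From mathcomp Require Import all_boot all_order all_algebra.
From mathcomp Require Import reals.
From mathcomp Require Import zify ring lra.
Import Order.TTheory GRing.Theory Num.Theory.
Local Open Scope ring_scope.
Set Implicit Arguments. Unset Strict Implicit.


Section Aux.
Variable R : realType.
Variable n : nat.
Local Notation J := (@Jmx R n).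

Lemma JT : J^T = - J.
Proof.
rewrite /Jmx tr_block_mx !trmx0 raddfN /= !trmx1.
by rewrite opp_block_mx !oppr0 opprK.
Qed.

Lemma JJ : J *m J = - 1%:M.
Proof.
rewrite /Jmx mulmx_block !mulmx0 !mul0mx !addr0 !add0r.
rewrite ?mulmx1 ?mul1mx ?mulmxN ?mulNmx ?mulmx1 ?mul1mx.
by rewrite (scalar_mx_block n n (1 : R)) opp_block_mx oppr0.
Qed.

Lemma JTJ : J^T *m J = 1%:M.
Proof. by rewrite JT mulNmx JJ opprK. Qed.

Definition Pinv (S : 'M[R]_(n + n)) := - (J *m S^T *m J).

Lemma PinvS S : symplectic S -> Pinv S *m S = 1%:M.
Proof.
move=> hS; rewrite /Pinv mulNmx -!mulmxA [S^T *m _]mulmxA hS JJ opprK.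
by [].
Qed.

Lemma SPinv S : symplectic S -> S *m Pinv S = 1%:M.
Proof. by move=> hS; apply: mulmx1C; apply: PinvS. Qed.

Lemma PinvT S : (Pinv S)^T = - (J *m S *m J).
Proof.
rewrite /Pinv raddfN /= !trmx_mul trmxK JT mulmxN mulNmx opprK mulmxN mulmxA.
by [].
Qed.

Lemma J_PinvT S : J *m (Pinv S)^T = S *m J.
Proof.
by rewrite PinvT mulmxN !mulmxA JJ !mulNmx mul1mx opprK.
Qed.

Lemma Pinv_symp S : symplectic S -> Pinv S *m J *m (Pinv S)^T = J.
Proof.
by move=> hS; rewrite -mulmxA J_PinvT mulmxA PinvS // mul1mx.
Qed.

Lemma Pinv_conj S X E : symplectic S -> S^T *m X *m S = E ->
  X = (Pinv S)^T *m E *m Pinv S.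
Proof.
move=> hS <-; rewrite !mulmxA -trmx_mul -mulmxA -mulmxA SPinv // mulmx1.
by rewrite trmx1 mul1mx.
Qed.

End Aux.

Section CP.
Variable R : realType.
Lemma char_poly_sim m (S P K : 'M[R]_m) : S *m P = 1%:M ->
  char_poly (S *m K *m P) = char_poly K.
Proof.
move=> hSP.
have hPS : P *m S = 1%:M by apply: mulmx1C.
rewrite /char_poly /char_poly_mx.
have hX : ('X%:M : 'M[{poly R}]_m) = map_mx polyC S *m 'X%:M *m map_mx polyC P.
  by rewrite mul_mx_scalar -scalemxAl -map_mxM hSP map_mx1 scalemx1.
rewrite {1}hX !map_mxM -!mulmxA -mulmxBr -mulmxBl !det_mulmx mulrCA -det_mulmx.
by rewrite -map_mxM hSP map_mx1 det1 mulr1.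
Qed.
End CP.


Section U.
Variable R : realType.
Variable n : nat.
Local Notation J := (@Jmx R n).

Definition ent (d : 'rV[R]_n) := [seq d 0 i | i <- enum 'I_n].

Lemma cp_invariant S X E : symplectic S -> S^T *m X *m S = E ->
  char_poly ((J *m X) *m (J *m X)) = char_poly ((J *m E) *m (J *m E)).
Proof.
move=> hS hE; rewrite (Pinv_conj hS hE).
have -> : J *m ((Pinv S)^T *m E *m Pinv S) = S *m (J *m E) *m Pinv S.
  by rewrite !mulmxA J_PinvT.
have -> : S *m (J *m E) *m Pinv S *m (S *m (J *m E) *m Pinv S) =
   S *m ((J *m E) *m (J *m E)) *m Pinv S.
  rewrite -!mulmxA; congr (_ *m _); congr (_ *m _).
  by rewrite [Pinv S *m (S *m _)]mulmxA PinvS // mul1mx.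
by rewrite char_poly_sim // SPinv.
Qed.

Lemma JE2 (d : 'rV[R]_n) : (J *m dbl_diag d) *m (J *m dbl_diag d)
  = diag_mx (row_mx (\row_i - (d 0 i ^+ 2)) (\row_i - (d 0 i ^+ 2))).
Proof.
rewrite /Jmx /dbl_diag diag_mx_row !mulmx_block !mulmx0 !mul0mx !addr0 !add0r.
rewrite ?mul1mx ?mulNmx ?mul1mx ?mulmxN ?mulNmx ?mulmx0 ?mul0mx ?addr0 ?add0r ?oppr0.
rewrite mulmx_diag.
have -> : forall v : 'rV[R]_n, - diag_mx v = diag_mx (- v) by move=> v; rewrite raddfN.
have h : (- \row_j (d 0 j * d 0 j)) = \row_i - d 0 i ^+ 2 by apply/rowP => i; rewrite !mxE expr2.
by rewrite addr0 h.
Qed.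

Lemma diag_ii m (v : 'rV[R]_m) i : diag_mx v i i = v 0 i.
Proof. by rewrite mxE eqxx mulr1n. Qed.

Lemma cp_dbl (d : 'rV[R]_n) : char_poly ((J *m dbl_diag d) *m (J *m dbl_diag d))
  = \prod_(x <- ent (\row_i - (d 0 i ^+ 2)) ++ ent (\row_i - (d 0 i ^+ 2))) ('X - x%:P).
Proof.
rewrite JE2 char_poly_trig ?diag_mx_is_trig // big_cat /= !big_map.
rewrite big_split_ord /=; congr (_ * _); apply: eq_bigr => i _;
  by rewrite diag_ii ?row_mxEl ?row_mxEr !mxE.
Qed.

Lemma ent_sq (d : 'rV[R]_n) : (forall i, 0 < d 0 i) ->
  ent d = map (fun y => Num.sqrt (- y)) (ent (\row_i - (d 0 i ^+ 2))).
Proof.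
move=> hd; rewrite /ent -[in RHS]map_comp; apply: eq_map => i /=.
by rewrite mxE opprK sqrtr_sqr ger0_norm // ltW.
Qed.

Lemma symp_unique (A S1 S2 : 'M[R]_(n + n)) d d' :
  symplectic S1 -> S1^T *m A *m S1 = dbl_diag d ->
  symplectic S2 -> S2^T *m A *m S2 = dbl_diag d' ->
  (forall i, 0 < d 0 i) -> (forall i, 0 < d' 0 i) ->
  perm_eq (ent d) (ent d').
Proof.
move=> h1 e1 h2 e2 p1 p2.
have := cp_invariant h1 e1; rewrite (cp_invariant h2 e2) !cp_dbl => e.
have /permP hc := Pdiv.Field.prod_XsubC_eq (esym e).
rewrite (ent_sq p1) (ent_sq p2); apply: perm_map; apply/permP => a.
have := hc a; rewrite !count_cat.
by rewrite !addnn => /double_inj.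
Qed.
End U.


Section Maj.
Variable R : realType.

Lemma sum_nth_take (s : seq R) k : (k <= size s)%N ->
  \sum_(i < k) nth 0 s i = \sum_(x <- take k s) x.
Proof.
move=> hk; rewrite (big_nth 0) big_mkord size_takel //.
by apply: eq_bigr => i _; rewrite nth_take.
Qed.

Lemma sum_nth (s : seq R) : \sum_(i < size s) nth 0 s i = \sum_(x <- s) x.
Proof. by rewrite sum_nth_take // take_size. Qed.

Lemma L1 (z : seq (R * R)) k :
  sorted (relpre snd <=%R) z ->
  (forall p, p \in z -> 0 <= p.1 <= 1) ->
  \sum_(p <- z) p.1 = k%:R -> (k <= size z)%N ->
  \sum_(i < k) nth 0 (unzip2 z) i <= \sum_(p <- z) p.1 * p.2.
Proof.
move=> hs hw hsum hk.
set m := size z.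
pose p0 := ((0 : R), (0 : R)).
pose s i := (nth p0 z i).2.
pose w i := (nth p0 z i).1.
have hsort : sorted <=%R (unzip2 z) by rewrite sorted_map.
have hmono : forall i j, (i <= j)%N -> (j < m)%N -> s i <= s j.
  move=> i j hij hj; rewrite /s -!(nth_map p0 0 snd) ?(leq_ltn_trans hij) //.
  apply: (sorted_leq_nth le_trans lexx 0 hsort) => //;
    rewrite inE size_map ?(leq_ltn_trans hij) //.
have hw' : forall i, (i < m)%N -> 0 <= w i <= 1 by move=> i hi; apply: hw; rewrite mem_nth.
have -> : \sum_(p <- z) p.1 * p.2 = \sum_(i < m) w i * s i.
  by rewrite (big_nth p0) big_mkord.
rewrite (big_nth p0) big_mkord -/m in hsum.
have -> : \sum_(i < k) nth 0 (unzip2 z) i = \sum_(i < m) (if (i < k)%N then s i else 0).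
  rewrite -big_mkcond -(big_ord_widen _ (fun i => s i) hk).
  by apply: eq_bigr => i _; rewrite (nth_map p0) // (leq_trans (ltn_ord i) hk).
have hb : \sum_(i < m) (if (i < k)%N then 1 else 0) = k%:R :> R.
  rewrite -big_mkcond -(big_ord_widen _ (fun _ => 1) hk) sumr_const card_ord.
  by [].
set c := s k.-1.
rewrite -subr_ge0 -sumrB.
have h0 : \sum_(i < m) (w i - (if (i < k)%N then 1 else 0)) * c = 0.
  by rewrite -mulr_suml sumrB hsum hb subrr mul0r.
suff : \sum_(i < m) (w i - (if (i < k)%N then 1 else 0)) * c <= \sum_(i < m) (w i * s i - (if (i < k)%N then s i else 0)) by rewrite h0.
apply: ler_sum => i _.
have /andP [w0 w1] := hw' i (ltn_ord i).
have him := ltn_ord i.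
rewrite -subr_ge0.
have -> : w i * s i - (if (i < k)%N then s i else 0) -
    (w i - (if (i < k)%N then 1 else 0)) * c =
    (w i - (if (i < k)%N then 1 else 0)) * (s i - c).
  by case: ifP => _; ring.
case: ltnP => hik.
  have : s i <= c by apply: hmono; lia.
  rewrite -subr_le0 => h1; apply: mulr_le0 => //; rewrite subr_le0 //.
have : c <= s i by apply: hmono; lia.
rewrite -subr_ge0 => h1; apply: mulr_ge0 => //; rewrite subr0 //.
Qed.

Lemma sum_enum n (F : 'I_n -> R) : \sum_(j <- enum 'I_n) F j = \sum_j F j.
Proof. by rewrite big_enum. Qed.

Lemma L2 n (d : 'rV[R]_n) (wf : 'I_n -> R) k :
  (forall j, 0 <= wf j <= 1) -> \sum_j wf j = k%:R -> (k <= n)%N ->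
  \sum_(i < k) nth 0 (sorted_up d) i <= \sum_j wf j * d 0 j.
Proof.
move=> hw hs hk.
pose z0 := [seq (wf j, d 0 j) | j <- enum 'I_n].
pose z := sort (relpre snd <=%R) z0.
have pz : perm_eq z z0 by rewrite perm_sort.
have tot : total (relpre (@snd R R) (<=%R : rel R)).
  move=> p q /=; exact: le_total.
have -> : sorted_up d = unzip2 z.
  apply: (sorted_eq le_trans le_anti).
  - exact: sort_sorted le_total _.
  - by rewrite sorted_map; apply: sort_sorted.
  rewrite perm_sort perm_sym; apply: (perm_trans (perm_map snd pz)).
  by rewrite /z0 -map_comp.
have e1 : forall F : R * R -> R, \sum_(p <- z) F p = \sum_j F (wf j, d 0 j).
  by move=> F; rewrite (perm_big _ pz) big_map sum_enum.
rewrite -(e1 (fun p => p.1 * p.2)).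
apply: L1.
- by apply: sort_sorted.
- move=> p; rewrite (perm_mem pz) => /mapP [j _ ->] /=; exact: hw.
- by rewrite e1.
- by rewrite (perm_size pz) size_map size_enum_ord.
Qed.

Lemma sum_sorted n (x : 'rV[R]_n) :
  \sum_(i < n) nth 0 (sorted_up x) i = \sum_i x 0 i.
Proof.
have hs : size (sorted_up x) = n by rewrite size_sort size_map size_enum_ord.
rewrite sum_nth_take ?hs // take_oversize ?hs // /sorted_up (perm_big _ (permEl (perm_sort _ _))) big_map.
by rewrite sum_enum.
Qed.

Lemma maj_sum n (x y : 'rV[R]_n) : majorized x y -> \sum_i x 0 i = \sum_i y 0 i.
Proof. by case=> _; rewrite !sum_sorted. Qed.

Lemma maj_perm n (x y y' : 'rV[R]_n) : perm_eq (ent y) (ent y') ->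
  majorized x y -> majorized x y'.
Proof.
move=> hp; have e : sorted_up y = sorted_up y'.
  by apply/(perm_sortP le_total le_trans le_anti).
by rewrite /majorized e.
Qed.

Lemma ds_maj n (x d : 'rV[R]_n) (W : 'M[R]_n) :
  (forall i j, 0 <= W i j) -> (forall i, \sum_j W i j = 1) ->
  (forall j, \sum_i W i j = 1) ->
  (forall i, x 0 i = \sum_j W i j * d 0 j) -> majorized x d.
Proof.
move=> W0 Wr Wc hx; split; last first.
  rewrite !sum_sorted; under eq_bigr do rewrite hx.
  rewrite exchange_big /=; apply: eq_bigr => j _.
  by rewrite -mulr_suml Wc mul1r.
move=> k hk.
pose idx := sort (relpre (x 0) <=%R) (enum 'I_n).
have ex : sorted_up x = map (x 0) idx.
  apply: (sorted_eq le_trans le_anti).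
  - exact: sort_sorted le_total _.
  - rewrite sorted_map; apply: sort_sorted => i j /=; exact: le_total.
  rewrite /sorted_up perm_sort; apply: perm_map; rewrite perm_sym perm_sort //.
pose K := take k idx.
have hK : uniq K by rewrite take_uniq // sort_uniq enum_uniq.
have hsK : size K = k by rewrite size_takel // size_sort size_enum_ord.
have -> : \sum_(i < k) nth 0 (sorted_up x) i = \sum_j (\sum_(i <- K) W i j) * d 0 j.
  rewrite sum_nth_take; last by rewrite ex size_map size_sort size_enum_ord.
  rewrite ex -map_take big_map.
  under eq_bigr do rewrite hx.
  rewrite exchange_big /=; apply: eq_bigr => j _.
  by rewrite mulr_suml.
apply: L2 => //.
- move=> j; apply/andP; split; first by apply: sumr_ge0.
  rewrite (big_uniq _ hK) -(Wc j) [X in _ <= X](bigID (mem K)) /=.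
  by rewrite lerDl sumr_ge0.
- rewrite exchange_big /=; under eq_bigr do rewrite Wr.
  by rewrite big_const_seq count_predT hsK iter_addr addr0.
Qed.
End Maj.


Section M.
Variable R : realType.

Lemma posdef_diag m (A : 'M[R]_m) r : sym_posdef A -> 0 < A r r.
Proof.
case=> _ hp; have := hp (delta_mx r 0).
rewrite trmx_delta -rowE -colE !mxE.
apply; apply/eqP => h; have := congr1 (fun M : 'M[R]_(m, 1) => M r 0) h.
by rewrite !mxE !eqxx /= => /eqP; rewrite oner_eq0.
Qed.

Lemma sqrt_prod (a b : R) : 0 < a -> 0 < b ->
  Num.sqrt (a^-1 * b) * a = Num.sqrt (a * b).
Proof.
move=> ha hb.
rewrite -{2}(ger0_norm (ltW ha)) -sqrtr_sqr -sqrtrM; last first.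
  by rewrite mulr_ge0 // ltW // invr_gt0.
congr Num.sqrt; field; by rewrite gt_eqF.
Qed.

Lemma root4M (x y : R) : 0 <= x -> root4 x * root4 y = root4 (x * y).
Proof. by move=> hx; rewrite /root4 -sqrtrM ?sqrtr_ge0 // -sqrtrM. Qed.

Lemma root4_sq (x : R) : 0 <= x -> root4 x ^+ 2 = Num.sqrt x.
Proof. by move=> hx; rewrite /root4 sqr_sqrtr // sqrtr_ge0. Qed.

Lemma root4_1 : root4 (1 : R) = 1.
Proof. by rewrite /root4 !sqrtr1. Qed.


Variable n : nat.
Variable A : 'M[R]_(n + n).
Hypothesis hA : sym_posdef A.
Local Notation a i := (Delta11 A 0 i).
Local Notation b i := (Delta22 A 0 i).
Let r1 := \row_i root4 ((a i)^-1 * b i).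
Let r2 := \row_i root4 (a i * (b i)^-1).

Lemma a_pos i : 0 < a i.
Proof. by rewrite mxE; apply: posdef_diag. Qed.
Lemma b_pos i : 0 < b i.
Proof. by rewrite mxE; apply: posdef_diag. Qed.

Lemma Mmx_diag : Mmx A = diag_mx (row_mx r1 r2).
Proof. by rewrite diag_mx_row. Qed.

Lemma MT : (Mmx A)^T = Mmx A.
Proof. by rewrite Mmx_diag tr_diag_mx. Qed.

Lemma r12 : diag_mx r1 *m diag_mx r2 = 1%:M.
Proof.
rewrite mulmx_diag -diag_const_mx; congr diag_mx; apply/rowP => i.
have ha := a_pos i; have hb := b_pos i.
have hab : 0 <= (a i)^-1 * b i by apply: mulr_ge0; [rewrite invr_ge0|]; apply: ltW.
rewrite !mxE in ha hb hab *; rewrite root4M //.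
have -> : (A (lshift n i) (lshift n i))^-1 * A (rshift n i) (rshift n i) *
  (A (lshift n i) (lshift n i) / A (rshift n i) (rshift n i)) = 1.
  by field; rewrite !gt_eqF.
by rewrite root4_1.
Qed.

Lemma M_symp : symplectic (Mmx A).
Proof.
rewrite /symplectic MT /Mmx /Jmx -/r1 -/r2 !mulmx_block !mulmx0 !mul0mx.
rewrite ?addr0 ?add0r ?mulmx1 ?mulmxN ?mulNmx ?mulmx1 ?mulmx0 ?mul0mx ?addr0 ?add0r ?oppr0.
by rewrite r12 diag_mxC r12.
Qed.

Lemma MJMT : Mmx A *m @Jmx R n *m (Mmx A)^T = @Jmx R n.
Proof. by have := M_symp; rewrite /symplectic MT. Qed.

Lemma MAM_entry (v : 'rV[R]_(n + n)) (X : 'M[R]_(n + n)) p q :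
  (diag_mx v *m X *m diag_mx v) p q = v 0 p * X p q * v 0 q.
Proof. by rewrite mul_mx_diag mul_diag_mx !mxE. Qed.

Lemma B_ll i : (Mmx A *m A *m Mmx A) (lshift n i) (lshift n i) = Delta_s A 0 i.
Proof.
have ha := a_pos i; have hb := b_pos i.
rewrite !mxE in ha hb.
rewrite Mmx_diag MAM_entry row_mxEl !mxE mulrAC -expr2 root4_sq; last first.
  by apply: mulr_ge0; [rewrite invr_ge0|]; apply: ltW.
by rewrite sqrt_prod.
Qed.

Lemma B_rr i : (Mmx A *m A *m Mmx A) (rshift n i) (rshift n i) = Delta_s A 0 i.
Proof.
have ha := a_pos i; have hb := b_pos i.
rewrite !mxE in ha hb.
rewrite Mmx_diag MAM_entry row_mxEr !mxE mulrAC -expr2 root4_sq; last first.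
  by apply: mulr_ge0; [|rewrite invr_ge0]; apply: ltW.
by rewrite [_ / _]mulrC sqrt_prod // mulrC.
Qed.
End M.


Section Core.
Variable R : realType.
Variable n : nat.
Local Notation J := (@Jmx R n).

Lemma sum_prod_entry m q (X Y : 'M[R]_(m, q)) i j :
  \sum_k X i k * Y j k = (X *m Y^T) i j.
Proof. by rewrite !mxE; apply: eq_bigr => k _; rewrite !mxE. Qed.

Lemma dbl_diagE (d : 'rV[R]_n) : dbl_diag d = diag_mx (row_mx d d).
Proof. by rewrite diag_mx_row. Qed.

Lemma trace_form (P : 'M[R]_(n + n)) (d : 'rV[R]_n) :
  let B := P^T *m dbl_diag d *m P in
  \sum_i (B (lshift n i) (lshift n i) + B (rshift n i) (rshift n i)) =
  \sum_j d 0 j * ((P *m P^T) (lshift n j) (lshift n j) + (P *m P^T) (rshift n j) (rshift n j)).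
Proof.
move=> B.
have -> : \sum_i (B (lshift n i) (lshift n i) + B (rshift n i) (rshift n i)) = \tr B.
  by rewrite /mxtrace big_split_ord big_split.
rewrite /B mxtrace_mulC mulmxA dbl_diagE /mxtrace big_split_ord /=.
under [RHS]eq_bigr do rewrite mulrDr.
rewrite big_split /=; congr (_ + _); apply: eq_bigr => j _;
  rewrite mul_mx_diag [LHS]mxE ?row_mxEl ?row_mxEr mulrC //.
Qed.

Lemma J_lr j : J (lshift n j) (rshift n j) = 1.
Proof. by rewrite /Jmx block_mxEur mxE eqxx. Qed.

Lemma sq_form (P : 'M[R]_(n + n)) j : P *m J *m P^T = J ->
  \sum_k (P (lshift n j) k - (P *m J^T) (rshift n j) k) ^+ 2 =
  (P *m P^T) (lshift n j) (lshift n j) + (P *m P^T) (rshift n j) (rshift n j) - 2.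
Proof.
move=> hP.
set x := fun k => P (lshift n j) k.
set y := fun k => (P *m J^T) (rshift n j) k.
have e : forall k, (x k - y k) ^+ 2 = x k * x k + y k * y k - 2 * (x k * y k)
  by move=> k; ring.
rewrite (eq_bigr _ (fun k _ => e k)) sumrB big_split /= -mulr_sumr /x /y.
have h1 : P *m J^T *m (P *m J^T)^T = P *m P^T.
  by rewrite trmx_mul trmxK -!mulmxA [J^T *m (J *m _)]mulmxA JTJ mul1mx.
have h2 : P *m (P *m J^T)^T = J by rewrite trmx_mul trmxK mulmxA hP.
by rewrite !sum_prod_entry h1 h2 J_lr mulr1.
Qed.

Lemma core (P : 'M[R]_(n + n)) (d : 'rV[R]_n) :
  (forall i, 0 < d 0 i) -> P *m J *m P^T = J ->
  (let B := P^T *m dbl_diag d *m P in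
   \sum_i (B (lshift n i) (lshift n i) + B (rshift n i) (rshift n i)) =
   2 * \sum_i d 0 i) ->
  P *m P^T = 1%:M.
Proof.
move=> hd hP; cbv zeta; rewrite trace_form => htr.
set v := fun j k => P (lshift n j) k - (P *m J^T) (rshift n j) k.
have h0 : \sum_j d 0 j * (\sum_k v j k ^+ 2) = 0.
  under eq_bigr do rewrite sq_form //.
  under eq_bigr do rewrite mulrBr.
  by rewrite sumrB htr -mulr_suml mulrC subrr.
have hv : forall j k, P (lshift n j) k = (P *m J^T) (rshift n j) k.
  move=> j k; apply/eqP; rewrite -subr_eq0; apply/eqP.
  have hj : d 0 j * (\sum_k v j k ^+ 2) = 0.
    apply: (psumr_eq0P _ h0) => // i _.
    by apply: mulr_ge0; [apply: ltW | apply: sumr_ge0 => l _; apply: sqr_ge0].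
  move/eqP: hj; rewrite mulf_eq0 gt_eqF //= => /eqP hs.
  have := psumr_eq0P (P := xpredT) (F := fun l => v j l ^+ 2) (fun l _ => sqr_ge0 (v j l)) hs (i := k) isT.
  by move/eqP; rewrite sqrf_eq0 => /eqP.
have hU : usubmx P = dsubmx P *m J^T.
  apply/row_matrixP => j; rewrite mul_dsub_mx row_usubmx row_dsubmx.
  by apply/rowP => k; rewrite !mxE hv !mxE.
move: hP; rewrite -[P]vsubmxK hU tr_col_mx mul_col_mx !mul_col_row.
set Dn := dsubmx P.
rewrite {3}/Jmx => /eq_block_mx [_ h12 _ h22].
rewrite (scalar_mx_block n n 1).
have hDD : Dn *m Dn^T = 1%:M.
  by rewrite -h12 -!mulmxA [J^T *m (J *m _)]mulmxA JTJ mul1mx.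
have hDJD : Dn *m J^T *m Dn^T = 0.
  by rewrite JT mulmxN mulNmx h22 oppr0.
congr block_mx.
- by rewrite trmx_mul trmxK -!mulmxA [J^T *m (J *m _)]mulmxA JTJ mul1mx.
- by [].
- by rewrite trmx_mul trmxK mulmxA h22.
- by [].
Qed.
End Core.


Section Schur.
Variable R : realType.
Variable n : nat.

Lemma sq_split (X : 'M[R]_(n + n)) r :
  (X *m X^T) r r = \sum_j (X r (lshift n j) ^+ 2 + X r (rshift n j) ^+ 2).
Proof.
by rewrite -sum_prod_entry big_split_ord big_split /=; congr (_ + _);
  apply: eq_bigr => j _; rewrite expr2.
Qed.

Lemma sq_splitT (X : 'M[R]_(n + n)) s :
  (X^T *m X) s s = \sum_i (X (lshift n i) s ^+ 2 + X (rshift n i) s ^+ 2).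
Proof.
by rewrite -{2}(trmxK X) sq_split; apply: eq_bigr => i _; rewrite !mxE.
Qed.

Lemma entry_diag m (X : 'M[R]_m) (v : 'rV[R]_m) i j :
  (X *m diag_mx v) i j = X i j * v 0 j.
Proof. by rewrite mul_mx_diag mxE. Qed.

Lemma diag_form (O : 'M[R]_(n + n)) (D : 'rV[R]_n) r :
  (O *m dbl_diag D *m O^T) r r =
  \sum_j D 0 j * (O r (lshift n j) ^+ 2 + O r (rshift n j) ^+ 2).
Proof.
rewrite -sum_prod_entry dbl_diagE big_split_ord /=.
under [RHS]eq_bigr do rewrite mulrDr.
rewrite big_split /=; congr (_ + _); apply: eq_bigr => j _;
  rewrite entry_diag ?row_mxEl ?row_mxEr; ring.
Qed.

Lemma schur (B O : 'M[R]_(n + n)) (x D : 'rV[R]_n) :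
  O^T *m O = 1%:M -> O^T *m B *m O = dbl_diag D ->
  (forall i, B (lshift n i) (lshift n i) = x 0 i) ->
  (forall i, B (rshift n i) (rshift n i) = x 0 i) ->
  majorized x D.
Proof.
move=> hO hE hl hr.
have hO' : O *m O^T = 1%:M by apply: mulmx1C.
have eB : B = O *m dbl_diag D *m O^T.
  by rewrite -hE !mulmxA hO' mul1mx -mulmxA hO' mulmx1.
pose W := \matrix_(i < n, j < n) ((O (lshift n i) (lshift n j) ^+ 2 +
   O (lshift n i) (rshift n j) ^+ 2 + O (rshift n i) (lshift n j) ^+ 2 +
   O (rshift n i) (rshift n j) ^+ 2) / 2).
apply: (@ds_maj R n x D W).
- move=> i j; rewrite mxE; apply: divr_ge0 => //.
  by rewrite !addr_ge0 // sqr_ge0.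
- move=> i.
  have := congr1 (fun M : 'M[R]_(n + n) => M (lshift n i) (lshift n i) +
                                           M (rshift n i) (rshift n i)) hO'.
  rewrite /= !sq_split -big_split /= !mxE !eqxx /= => h.
  under eq_bigr do rewrite mxE.
  rewrite -mulr_suml.
  transitivity ((1 + 1) / (2 : R)); last by field.
  by congr (_ * _); rewrite -h; apply: eq_bigr => k _; ring.
- move=> j.
  have := congr1 (fun M : 'M[R]_(n + n) => M (lshift n j) (lshift n j) +
                                           M (rshift n j) (rshift n j)) hO.
  rewrite /= !sq_splitT -big_split /= !mxE !eqxx /= => h.
  under eq_bigr do rewrite mxE.
  rewrite -mulr_suml.
  transitivity ((1 + 1) / (2 : R)); last by field.
  by congr (_ * _); rewrite -h; apply: eq_bigr => k _; ring.
- move=> i.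
  have e := congr1 (fun M : 'M[R]_(n + n) => M (lshift n i) (lshift n i) +
                                           M (rshift n i) (rshift n i)) eB.
  rewrite /= hl hr !diag_form -big_split /= in e.
  transitivity ((x 0 i + x 0 i) / 2); first by field.
  rewrite e mulr_suml; apply: eq_bigr => j _; rewrite mxE. by field.
Qed.
End Schur.


Unset Implicit Arguments.
Set Strict Implicit.

Theorem theorem1p1 (R : realType) (n : nat) (A : 'M[R]_(n + n)) :
  (0 < n)%N -> sym_posdef A ->
  symplectic (Mmx A) /\
  (forall d : 'rV[R]_n, symp_eigvals A d ->
     (majorized (Delta_s A) d <->
      orthosymp_diagonalizable (Mmx A *m A *m Mmx A))).
Proof.
move=> _ hA; split; first exact: M_symp hA.
move=> d [hd [S1 [hS1 e1]]]; split.
- move=> hmaj.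
  have eA := Pinv_conj hS1 e1.
  set P1 := Pinv S1 in eA.
  have hP1 : P1 *m Jmx R n *m P1^T = Jmx R n by apply: Pinv_symp.
  pose P := P1 *m Mmx A.
  have eB : Mmx A *m A *m Mmx A = P^T *m dbl_diag d *m P.
    by rewrite {2}eA /P trmx_mul MT !mulmxA.
  have hPJ : P *m Jmx R n *m P^T = Jmx R n.
    rewrite /P trmx_mul -!mulmxA [Mmx A *m (Jmx R n *m _)]mulmxA.
    rewrite [Mmx A *m Jmx R n *m _]mulmxA (MJMT hA).
    by rewrite mulmxA hP1.
  have hPP : P *m P^T = 1%:M.
    apply: core hd hPJ _ => /=.
    rewrite -eB; under eq_bigr do rewrite (B_ll hA) (B_rr hA).
    by rewrite big_split /= (maj_sum hmaj); ring.
  exists P^T, d; split; [split|split] => //.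
  + by rewrite /symplectic trmxK.
  + by rewrite /orthogonal_mx trmxK.
    rewrite trmxK eB.
    have -> : P *m (P^T *m dbl_diag d *m P) *m P^T = (P *m P^T) *m dbl_diag d *m (P *m P^T) by rewrite !mulmxA.
    by rewrite hPP mul1mx mulmx1.
- move=> [S2 [D' [[hs2 ho2] [hD' e2]]]].
  have m1 := schur ho2 e2 (B_ll hA) (B_rr hA).
  have hMS : symplectic (Mmx A *m S2).
    rewrite /symplectic trmx_mul -!mulmxA [(Mmx A)^T *m _]mulmxA.
    rewrite [(Mmx A)^T *m Jmx R n *m _]mulmxA M_symp // mulmxA.
    exact: hs2.
  have eMS : (Mmx A *m S2)^T *m A *m (Mmx A *m S2) = dbl_diag D'.
    by rewrite trmx_mul MT -e2 !mulmxA.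
  have hp := symp_unique hS1 e1 hMS eMS hd hD'.
  by apply: maj_perm m1; rewrite perm_sym.
Qed.
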